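(* Suppose $J^d_\mu$ takes the same value for all $d\in\mathcal D$. Then a policy $d\in\mathcal D$, with quantities $(\mathbf P,\mathbf r,J_\mu,\mathbf g)$, satisfies $J^d_{\mu,\sigma}=\max_{d''\in\mathcal D}J^{d''}_{\mu,\sigma}$ if and only if for every $d'\in\mathcal D$ with $(\mathbf P',\mathbf r')$, $$\sum_{j\in\mathcal S}p'(i,j)g(j)+r'(i)-\beta(r'(i)-J_\mu)^2\ \le\ \sum_{j\in\mathcal S}p(i,j)g(j)+r(i)-\beta(r(i)-J_\mu)^2\qquad\text{for all } i\in\mathcal S.$$
   Context: Let $\mathcal S=\{1,\dots,S\}$ be a finite state space and $\mathcal A$ a finite action set. For $i,j\in\mathcal S$, $a\in\mathcal A$, let $p^a(i,j)\ge 0$ with $\sum_{j}p^a(i,j)=1$ be transition probabilities and $r(i,a)\in\mathbb R$ rewards. A deterministic stationary policy is a map $d:\mathcal S\to\mathcal A$; $\mathcal D$ denotes the set of such policies. Under $d$, $\mathbf P^d$ is the matrix with entries $p(i,j)=p^{d(i)}(i,j)$ and $\mathbf r^d$ the vector with entries $r(i)=r(i,d(i))$. Standing assumption: for every $d\in\mathcal D$ the chain with transition matrix $\mathbf P^d$ is irreducible, so it has a unique stationary distribution $\boldsymbol\pi^d$ (row vector, $\boldsymbol\pi^d\mathbf P^d=\boldsymbol\pi^d$, $\boldsymbol\pi^d\mathbf 1=1$) with all entries strictly positive. Define $J^d_\mu=\boldsymbol\pi^d\mathbf r^d$, $J^d_\sigma=\sum_i\pi^d(i)(r(i,d(i))-J^d_\mu)^2$,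 and for fixed $\beta>0$, $J^d_{\mu,\sigma}=J^d_\mu-\beta J^d_\sigma=\boldsymbol\pi^d\mathbf f^d$ with $f^d(i)=r(i,d(i))-\beta(r(i,d(i))-J^d_\mu)^2$. The performance potential $\mathbf g^d$ is any solution of $\mathbf g^d=\mathbf f^d-J^d_{\mu,\sigma}\mathbf 1+\mathbf P^d\mathbf g^d$ (unique up to an additive constant vector). *)

(* Defs.v *)
From HB Require Import structures.
From mathcomp Require Import all_boot all_order all_algebra.
Set Implicit Arguments. Unset Strict Implicit. Unset Printing Implicit Defensive.
Import Order.TTheory GRing.Theory Num.Theory.
Local Open Scope ring_scope.

(* States: 'I_n (i.e. {0,...,n-1}, standing for {1,...,S}); actions: a finType A.
   A deterministic stationary policy is a function d : 'I_n -> A. *)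

Definition Pmat (R : pzRingType) (A : finType) (n : nat)
  (p : A -> 'I_n -> 'I_n -> R) (d : 'I_n -> A) : 'M[R]_n :=
  \matrix_(i, j) p (d i) i j.

Definition transition_kernel (R : realFieldType) (A : finType) (n : nat)
  (p : A -> 'I_n -> 'I_n -> R) : Prop :=
  (forall a i j, 0 <= p a i j) /\ (forall a i, \sum_j p a i j = 1).

Definition irreducible (R : realFieldType) (n : nat) (P : 'M[R]_n) : Prop :=
  forall i j : 'I_n, exists k : nat, 0 < (P ^+ k) i j.

Definition stationary_dist (R : realFieldType) (n : nat) (P : 'M[R]_n)
  (pi : 'rV[R]_n) : Prop :=
  pi *m P = pi /\ (forall i, 0 <= pi 0 i) /\ \sum_i pi 0 i = 1.

Definition Jmu (R : realFieldType) (A : finType) (n : nat)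
  (r : 'I_n -> A -> R) (pi : 'rV[R]_n) (d : 'I_n -> A) : R :=
  \sum_i pi 0 i * r i (d i).

Definition fvec (R : realFieldType) (A : finType) (n : nat)
  (r : 'I_n -> A -> R) (beta : R) (pi : 'rV[R]_n) (d : 'I_n -> A) (i : 'I_n) : R :=
  r i (d i) - beta * (r i (d i) - Jmu r pi d) ^+ 2.

Definition Jsigma (R : realFieldType) (A : finType) (n : nat)
  (r : 'I_n -> A -> R) (pi : 'rV[R]_n) (d : 'I_n -> A) : R :=
  \sum_i pi 0 i * (r i (d i) - Jmu r pi d) ^+ 2.

Definition Jmusigma (R : realFieldType) (A : finType) (n : nat)
  (r : 'I_n -> A -> R) (beta : R) (pi : 'rV[R]_n) (d : 'I_n -> A) : R :=
  Jmu r pi d - beta * Jsigma r pi d.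

Definition potential (R : realFieldType) (A : finType) (n : nat)
  (p : A -> 'I_n -> 'I_n -> R) (r : 'I_n -> A -> R) (beta : R)
  (pi : 'rV[R]_n) (d : 'I_n -> A) (g : 'I_n -> R) : Prop :=
  forall i, g i = fvec r beta pi d i - Jmusigma r beta pi d
                  + \sum_j p (d i) i j * g j.

(* Main.v *)
Require Import Defs.
From HB Require Import structures.
From mathcomp Require Import all_boot all_order all_algebra.
From mathcomp Require Import ring.
Import Order.TTheory GRing.Theory Num.Theory.
Local Open Scope ring_scope.

Lemma pow_ge0 (R : realFieldType) (n : nat) (P : 'M[R]_n) :
  (forall i j, 0 <= P i j) -> forall k i j, 0 <= (P ^+ k) i j.
Proof.
move=> H; elim=> [|k IH] i j.
  by rewrite expr0 mxE ler0n.
rewrite exprS -mulmxE mxE; apply: sumr_ge0 => l _; exact: mulr_ge0.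
Qed.

Lemma stat_pow (R : realFieldType) (n : nat) (P : 'M[R]_n) (pi : 'rV[R]_n) :
  pi *m P = pi -> forall k, pi *m P ^+ k = pi.
Proof.
move=> H; elim=> [|k IH]; first by rewrite expr0 mulmx1.
by rewrite exprS -mulmxE mulmxA H.
Qed.

Lemma pi_pos (R : realFieldType) (n : nat) (P : 'M[R]_n) (pi : 'rV[R]_n) :
  (forall i j, 0 <= P i j) -> irreducible P -> stationary_dist P pi ->
  forall i, 0 < pi 0 i.
Proof.
move=> Hnn Hirr [Hs [H0 H1]] i.
have [j Hj] : exists j, 0 < pi 0 j.
  case: (pickP (fun j => 0 < pi 0 j)) => [j Hj|Hn]; first by exists j.
  have : \sum_i pi 0 i <= 0.
    by apply: sumr_le0 => l _; rewrite leNgt Hn.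
  by rewrite H1 ler10.
have [k Hk] := Hirr j i.
have := @stat_pow _ _ _ _ Hs k => /matrixP /(_ 0 i); rewrite mxE => <-.
rewrite (bigD1 j) //=; apply: ltr_pwDl; first exact: mulr_gt0.
apply: sumr_ge0 => l _; apply: mulr_ge0 => //; exact: pow_ge0.
Qed.

Lemma Jms_sum (R : realFieldType) (A : finType) (n : nat)
  (r : 'I_n -> A -> R) (beta : R) (pi : 'rV[R]_n) (d : 'I_n -> A) :
  Jmusigma r beta pi d = \sum_i pi 0 i * fvec r beta pi d i.
Proof.
rewrite /Jmusigma /fvec /Jsigma.
have -> : \sum_i pi 0 i * (r i (d i) - beta * (r i (d i) - Jmu r pi d) ^+ 2)
  = \sum_i (pi 0 i * r i (d i) - beta * (pi 0 i * (r i (d i) - Jmu r pi d) ^+ 2)).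
  by apply: eq_bigr => i _; ring.
by rewrite sumrB -mulr_sumr.
Qed.

Theorem mainTheorem4 (R : realFieldType) (A : finType) (n : nat)
  (p : A -> 'I_n -> 'I_n -> R) (r : 'I_n -> A -> R) (beta : R)
  (pi : ('I_n -> A) -> 'rV[R]_n)
  (Hp : transition_kernel p)
  (Hbeta : 0 < beta)
  (Hirr : forall d : 'I_n -> A, irreducible (Pmat p d))
  (Hpi : forall d : 'I_n -> A, stationary_dist (Pmat p d) (pi d))
  (Hconst : forall d1 d2 : 'I_n -> A, Jmu r (pi d1) d1 = Jmu r (pi d2) d2)
  (d : 'I_n -> A) (g : 'I_n -> R)
  (Hg : potential p r beta (pi d) d g) :
  (forall d'' : 'I_n -> A,
      Jmusigma r beta (pi d'') d'' <= Jmusigma r beta (pi d) d)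
  <->
  (forall (d' : 'I_n -> A) (i : 'I_n),
      \sum_j p (d' i) i j * g j + r i (d' i)
        - beta * (r i (d' i) - Jmu r (pi d) d) ^+ 2
      <= \sum_j p (d i) i j * g j + r i (d i)
        - beta * (r i (d i) - Jmu r (pi d) d) ^+ 2).
Proof.
set J := Jmu r (pi d) d.
set eta := Jmusigma r beta (pi d) d.
pose h (d' : 'I_n -> A) i :=
  \sum_j p (d' i) i j * g j + r i (d' i) - beta * (r i (d' i) - J) ^+ 2.
have hd : forall i, h d i = g i + eta.
  move=> i; rewrite (Hg i) /h /fvec -/J -/eta; ring.
have diff : forall d', Jmusigma r beta (pi d') d' - eta
     = \sum_i pi d' 0 i * (h d' i - h d i).
  move=> d'.
  have [Hs [_ H1]] := Hpi d'.
  have Hsum : \sum_i pi d' 0 i * (\sum_j p (d' i) i j * g j)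
              = \sum_j pi d' 0 j * g j.
    under eq_bigr => i _ do rewrite mulr_sumr.
    rewrite exchange_big /=; apply: eq_bigr => j _.
    have := Hs => /matrixP /(_ 0 j); rewrite mxE => <-.
    rewrite mulr_suml; apply: eq_bigr => i _; rewrite mxE; ring.
  have E1 : \sum_i pi d' 0 i * h d' i
       = Jmusigma r beta (pi d') d' + \sum_j pi d' 0 j * g j.
    rewrite Jms_sum -Hsum -big_split /=; apply: eq_bigr => i _.
    rewrite /h /fvec (Hconst d' d) -/J; ring.
  have E2 : \sum_i pi d' 0 i * h d i = \sum_j pi d' 0 j * g j + eta.
    under eq_bigr => i _ do rewrite hd mulrDr.
    by rewrite big_split /= -mulr_suml H1 mul1r.
  under eq_bigr => i _ do rewrite mulrBr.
  rewrite sumrB E1 E2; ring.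
have Hnn : forall d' i j, 0 <= Pmat p d' i j.
  by move=> d' i j; rewrite mxE; case: Hp.
split.
- move=> Hopt d' i; rewrite -/(h d' i) -/(h d i).
  rewrite leNgt; apply/negP => Hlt.
  pose d'' := fun k => if k == i then d' i else d k.
  have := Hopt d''; rewrite -subr_le0 diff (bigD1 i) //=.
  have -> : \sum_(k | k != i) pi d'' 0 k * (h d'' k - h d k) = 0.
    apply: big1 => k Hk; rewrite /h /d'' (negbTE Hk) subrr; ring.
  rewrite addr0 /h /d'' eqxx -/(h d' i) -/(h d i) leNgt.
  move/negP; apply; apply: mulr_gt0; last by rewrite subr_gt0.
  exact: (@pi_pos _ _ _ _ (Hnn d'') (Hirr d'') (Hpi d'') i).
- move=> Hle d''; rewrite -subr_le0 diff; apply: sumr_le0 => i _.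
  apply: mulr_ge0_le0; first by case: (Hpi d'') => _ [].
  by rewrite subr_le0; apply: Hle.
Qed.
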